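(* Let $T\in\mathbb{B}(\mathscr{H})$. Then \[ \omega(T)\le \frac12\sqrt{2\,\omega(|T|\,|T^*|)+\left\||T|^2+|T^*|^2\right\|}\le \frac12\left(\|T^2\|^{1/2}+\|T\|\right). \]
   Context: $\mathscr{H}$ is a complex Hilbert space, $\mathbb{B}(\mathscr{H})$ the algebra of bounded linear operators on it, $T^*$ the adjoint, $|T|=(T^*T)^{1/2}$, $\|T\|$ the operator norm, and $\omega(T)=\sup_{\|x\|=1}|\langle Tx,x\rangle|$ the numerical radius. *)

(* Defs.v *)
From mathcomp Require Import all_boot all_order all_algebra.
From mathcomp Require Import complex.
From mathcomp Require Import all_classical all_reals.
Set Implicit Arguments. Unset Strict Implicit. Unset Printing Implicit Defensive.
Import Order.TTheory GRing.Theory Num.Theory.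
Local Open Scope ring_scope.
Local Open Scope classical_set_scope.

Section Hilbert.
Variable R : realType.
Local Notation C := R[i].
Variable H : lmodType C.
Variable ip : H -> H -> C.   (* inner product <x, y>, linear in x *)

Definition cmod (z : C) : R := Num.sqrt (complex.Re z ^+ 2 + complex.Im z ^+ 2).

Definition hnorm (x : H) : R := Num.sqrt (complex.Re (ip x x)).

Definition is_hilbert : Prop :=
  [/\ (forall (a : C) (x y z : H), ip (a *: x + y) z = a * ip x z + ip y z),
      (forall x y : H, ip y x = (ip x y)^*),
      (forall x : H, 0 <= ip x x),
      (forall x : H, ip x x = 0 -> x = 0) &
      (forall u : nat -> H,
         (forall e : R, 0 < e -> exists N : nat, forall m n : nat,
             (N <= m)%N -> (N <= n)%N -> hnorm (u m - u n) < e) ->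
         exists l : H, forall e : R, 0 < e -> exists N : nat, forall n : nat,
             (N <= n)%N -> hnorm (u n - l) < e)].

Definition is_bounded_op (T : H -> H) : Prop :=
  (forall (a : C) (x y : H), T (a *: x + y) = a *: T x + T y) /\
  (exists M : R, forall x : H, hnorm (T x) <= M * hnorm x).

Definition opnorm (T : H -> H) : R :=
  sup [set r : R | exists x : H, hnorm x = 1 /\ r = hnorm (T x)].

Definition numrad (T : H -> H) : R :=
  sup [set r : R | exists x : H, hnorm x = 1 /\ r = cmod (ip (T x) x)].

Definition is_adjoint (T S : H -> H) : Prop :=
  forall x y : H, ip (T x) y = ip x (S y).

Definition is_positive (A : H -> H) : Prop := forall x : H, 0 <= ip (A x) x.

Definition is_pos_sqrt (P A : H -> H) : Prop :=
  [/\ is_bounded_op A, is_positive A & forall x : H, A (A x) = P x].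

End Hilbert.

(* Main.v *)
Require Import Defs.
From mathcomp Require Import all_boot all_order all_algebra.
From mathcomp Require Import complex.
From mathcomp Require Import all_classical all_reals.
From mathcomp Require Import ring lra.
Set Implicit Arguments. Unset Strict Implicit.
Import Order.TTheory GRing.Theory Num.Theory.
Local Open Scope classical_set_scope.
Local Open Scope complex_scope.
Local Open Scope ring_scope.

Lemma quad_lemma (R : realType) (a c n : R) :
  0 <= a -> 0 <= c -> 0 <= n ->
  (forall t : R, 0 <= a - 2 * t * n + t ^+ 2 * n * c) -> n <= a * c.
Proof.
move=> a0 c0 n0 H.
have [n0'|npos] := eqVneq n 0; first by rewrite n0'; apply: mulr_ge0.
have {}npos : 0 < n by rewrite lt_def npos n0.
have [c0'|cpos] := eqVneq c 0.
  have := H ((a + 1) / n); rewrite c0' mulr0 addr0.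
  have -> : 2 * ((a + 1) / n) * n = 2 * (a + 1).
    by rewrite -mulrA divfK // gt_eqF.
  lra.
have {}cpos : 0 < c by rewrite lt_def cpos c0.
have := H (c^-1).
have -> : 2 * c^-1 * n = 2 * (n / c) by field; rewrite gt_eqF.
have -> : c^-1 ^+ 2 * n * c = n / c by field; rewrite gt_eqF.
move=> h.
have : n / c <= a by lra.
by rewrite ler_pdivrMr.
Qed.

Section Basic.
Variable R : realType.
Local Notation C := R[i].
Local Notation re := (@complex.Re R).
Local Notation im := (@complex.Im R).

Lemma conj_def (z : C) : z^* = (re z) +i* (- im z).
Proof. by case: z. Qed.

Definition n2 (z : C) : R := re z ^+ 2 + im z ^+ 2.

Lemma n2_ge0 z : 0 <= n2 z.
Proof. rewrite /n2; apply: addr_ge0; apply: sqr_ge0. Qed.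

Lemma mulJ (z : C) : z * z^* = (n2 z)%:C.
Proof. rewrite conj_def; case: z => a b; rewrite /n2 /=; simpc; rewrite !expr2.
  congr (_ +i* _); ring. Qed.

Lemma mulJ' (z : C) : z^* * z = (n2 z)%:C.
Proof. by rewrite mulrC mulJ. Qed.

Lemma ge0_real (z : C) : 0 <= z -> z = (re z)%:C.
Proof. case: z => a b; rewrite lecE /= => /andP[/eqP -> _]; by []. Qed.

Lemma ge0_re (z : C) : 0 <= z -> 0 <= re z.
Proof. by case: z => a b; rewrite lecE /= => /andP[_ ]. Qed.

Lemma reD (z w : C) : re (z + w) = re z + re w. Proof. by case: z; case: w. Qed.
Lemma reN (z : C) : re (- z) = - re z. Proof. by case: z. Qed.
Lemma reB (z w : C) : re (z - w) = re z - re w. Proof. by case: z; case: w. Qed.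
Lemma reJ (z : C) : re (z^*) = re z. Proof. by rewrite conj_def. Qed.
Lemma reRM (r : R) (z : C) : re (r%:C * z) = r * re z.
Proof. case: z => a b /=; simpc; by []. Qed.
Lemma reR (r : R) : re (r%:C) = r. Proof. by []. Qed.
Lemma conjR (r : R) : (r%:C)^* = r%:C.
Proof. by rewrite conj_def /= oppr0. Qed.

Lemma re_sq_le (z : C) : re z ^+ 2 <= n2 z.
Proof. rewrite /n2; have := sqr_ge0 (im z); lra. Qed.

Lemma lecR0 (r : R) : (0 <= r%:C) = (0 <= r).
Proof. by rewrite lecE /= eqxx. Qed.

Lemma n2_real (r : R) : n2 (r%:C) = r ^+ 2.
Proof. by rewrite /n2 /= expr0n /= addr0. Qed.

End Basic.

Section Form.
Variable R : realType.
Local Notation C := R[i].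
Local Notation re := (@complex.Re R).
Local Notation im := (@complex.Im R).
Variable V : lmodType C.

Lemma CS_form (f : V -> V -> C) :
 (forall a x y z, f (a*:x+y) z = a * f x z + f y z) ->
 (forall x y, f y x = (f x y)^*) -> (forall x, 0 <= f x x) ->
 forall x y, n2 (f x y) <= re (f x x) * re (f y y).
Proof.
move=> fD fC fP x y.
have fB : forall u v w, f (u - v) w = f u w - f v w.
  move=> u v w; have := fD (-1) v u w; rewrite scaleN1r mulN1r addrC => ->.
  by rewrite addrC.
have fZ : forall a u w, f (a *: u) w = a * f u w.
  move=> a u w; have := fD a u 0 w.
  have f0 : f 0 w = 0.
    have := fD 1 0 0 w; rewrite scale1r addr0 mul1r => h.
    by have := congr1 (fun z => z - f 0 w) h; rewrite /= subrr addrK.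
  by rewrite addr0 f0 addr0.
have fBr : forall u v w, f w (u - v) = f w u - f w v.
  by move=> u v w; rewrite fC fB rmorphB /= -!fC.
have fZr : forall a u w, f w (a *: u) = a^* * f w u.
  by move=> a u w; rewrite fC fZ rmorphM /= -fC.
set b := f x y.
have hyx : f y x = b^* by rewrite fC.
apply: quad_lemma.
- exact: ge0_re.
- exact: ge0_re.
- exact: n2_ge0.
move=> t.
have := fP (x - (t%:C * b) *: y).
rewrite fB !fBr !fZ !fZr hyx -/b rmorphM /= conjR.
rewrite (ge0_real (fP x)) (ge0_real (fP y)).
rewrite !reR.
set a := re (f x x); set c := re (f y y).
have -> : a%:C - t%:C * b^* * b - (t%:C * b * b^* - t%:C * b * (t%:C * b^* * c%:C))
   = a%:C - 2%:R * t%:C * (b * b^*) + t%:C ^+ 2 * (b * b^*) * c%:C by ring.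
rewrite mulJ.
have -> : a%:C - 2%:R * t%:C * (n2 b)%:C + t%:C ^+ 2 * (n2 b)%:C * c%:C
   = (a - 2 * t * n2 b + t ^+ 2 * n2 b * c)%:C.
  by rewrite !(rmorphB, rmorphD, rmorphM, rmorphXn, rmorph_nat).
by rewrite lecR0.
Qed.
End Form.

Lemma amgm (R : realType) (r a b : R) : 0 <= a -> 0 <= b -> r ^+ 2 <= a * b -> 2 * r <= a + b.
Proof.
move=> a0 b0; rewrite expr2 => h.
rewrite leNgt; apply/negP => hp.
have h1 : 0 < (2 * r - (a + b)) * (2 * r + (a + b)) by apply: mulr_gt0; lra.
have h2 : 0 <= (a - b) * (a - b) by apply: sqr_ge0.
nra.
Qed.

Lemma sq_le (R : realType) (x K : R) : 0 <= x -> 0 <= K -> x ^+ 2 <= K * x -> x <= K.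
Proof.
move=> x0 K0; rewrite expr2 => h.
rewrite leNgt; apply/negP => hp.
have pp : 0 < x by exact: le_lt_trans K0 hp.
have : K * x < x * x by rewrite ltr_pM2r.
lra.
Qed.

Section Hil.
Variable R : realType.
Local Notation C := R[i].
Local Notation re := (@complex.Re R).
Local Notation im := (@complex.Im R).
Variable V : lmodType C.
Variable ip : V -> V -> C.
Hypothesis ipD : forall (a : C) x y z, ip (a *: x + y) z = a * ip x z + ip y z.
Hypothesis ipC : forall x y, ip y x = (ip x y)^*.
Hypothesis ipP : forall x, 0 <= ip x x.
Hypothesis ipE : forall x, ip x x = 0 -> x = 0.

Lemma ip0l z : ip 0 z = 0.
Proof.
have := ipD 1 0 0 z; rewrite scale1r addr0 mul1r => h.
by have := congr1 (fun w => w - ip 0 z) h; rewrite /= subrr addrK.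
Qed.
Lemma ipDl x y z : ip (x + y) z = ip x z + ip y z.
Proof. by have := ipD 1 x y z; rewrite scale1r mul1r. Qed.
Lemma ipZl a x z : ip (a *: x) z = a * ip x z.
Proof. by have := ipD a x 0 z; rewrite !addr0 ip0l addr0. Qed.
Lemma ipNl x z : ip (- x) z = - ip x z.
Proof. by rewrite -scaleN1r ipZl mulN1r. Qed.
Lemma ipBl x y z : ip (x - y) z = ip x z - ip y z.
Proof. by rewrite ipDl ipNl. Qed.
Lemma ipDr x y z : ip z (x + y) = ip z x + ip z y.
Proof. by rewrite ipC ipDl rmorphD /= -!ipC. Qed.
Lemma ipZr a x z : ip z (a *: x) = a^* * ip z x.
Proof. by rewrite ipC ipZl rmorphM /= -ipC. Qed.
Lemma ipNr x z : ip z (- x) = - ip z x.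
Proof. by rewrite ipC ipNl rmorphN /= -ipC. Qed.
Lemma ipBr x y z : ip z (x - y) = ip z x - ip z y.
Proof. by rewrite ipDr ipNr. Qed.
Lemma ip0r z : ip z 0 = 0.
Proof. by rewrite ipC ip0l conjC0. Qed.

Definition nq x := re (ip x x).
Lemma ipxx x : ip x x = (nq x)%:C.
Proof. exact: ge0_real. Qed.
Lemma nq_ge0 x : 0 <= nq x.
Proof. exact: ge0_re. Qed.
Lemma nq_eq0 x : nq x = 0 -> x = 0.
Proof. by move=> h; apply: ipE; rewrite ipxx h. Qed.
Lemma re_ipC x y : re (ip y x) = re (ip x y).
Proof. by rewrite ipC reJ. Qed.

Lemma nqD x y : nq (x + y) = nq x + nq y + 2 * re (ip x y).
Proof.
rewrite /nq ipDl !ipDr !reD (re_ipC x y); ring.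
Qed.

Lemma ip_ext u v : (forall z, ip z u = ip z v) -> u = v.
Proof.
move=> h; apply/eqP; rewrite -subr_eq0; apply/eqP; apply: ipE.
by rewrite ipBr h subrr.
Qed.
Lemma ip_extl u v : (forall z, ip u z = ip v z) -> u = v.
Proof.
move=> h; apply: ip_ext => z; by rewrite ipC h -ipC.
Qed.

Lemma CS x y : n2 (ip x y) <= nq x * nq y.
Proof. exact: CS_form. Qed.

Definition lin (X : V -> V) := forall (a : C) x y, X (a *: x + y) = a *: X x + X y.
Definition adj (X Y : V -> V) := forall x y, ip (X x) y = ip x (Y y).
Definition pos (X : V -> V) := forall x, 0 <= ip (X x) x.

Section LinFacts.
Variable X : V -> V.
Hypothesis hX : lin X.
Lemma lin0 : X 0 = 0.
Proof.
have := hX 1 0 0; rewrite !scale1r addr0 => h.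
by have := congr1 (fun w => w - X 0) h; rewrite /= subrr addrK.
Qed.
Lemma linD x y : X (x + y) = X x + X y.
Proof. by have := hX 1 x y; rewrite !scale1r. Qed.
Lemma linZ a x : X (a *: x) = a *: X x.
Proof. by have := hX a x 0; rewrite !addr0 lin0 addr0. Qed.
Lemma linN x : X (- x) = - X x.
Proof. by rewrite -scaleN1r linZ scaleN1r. Qed.
Lemma linB x y : X (x - y) = X x - X y.
Proof. by rewrite linD linN. Qed.
End LinFacts.

Lemma adj_lin X Y : adj X Y -> lin Y.
Proof.
move=> h a x y; apply: ip_ext => z.
by rewrite -h ipDr ipZr !h ipDr ipZr.
Qed.

Lemma lin_comp X Y : lin X -> lin Y -> lin (fun x => X (Y x)).
Proof. by move=> hX hY a x y; rewrite hY hX. Qed.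

Lemma pos_adj X : lin X -> pos X -> adj X X.
Proof.
move=> hX hP.
pose g x y := ip (X x) y - ip x (X y).
have gxx : forall x, g x x = 0.
  move=> x; rewrite /g [ip x (X x)]ipC.
  have := hP x => /ge0_real ->; by rewrite conjR subrr.
have gD1 : forall x y z, g (x + y) z = g x z + g y z.
  by move=> x y z; rewrite /g linD // ipDl ipDl; ring.
have gD2 : forall x y z, g z (x + y) = g z x + g z y.
  by move=> x y z; rewrite /g linD // ipDr ipDr; ring.
have gZ1 : forall a x z, g (a *: x) z = a * g x z.
  by move=> a x z; rewrite /g linZ // !ipZl; ring.
have gZ2 : forall a x z, g z (a *: x) = a^* * g z x.
  by move=> a x z; rewrite /g linZ // !ipZr; ring.
move=> x y; apply/eqP; rewrite -subr_eq0; apply/eqP; rewrite -/(g x y).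
have h1 := gxx (x + y); rewrite gD1 !gD2 !gxx add0r addr0 in h1.
have h2 := gxx (x + 'i%C *: y); rewrite gD1 !gD2 !gZ1 !gZ2 !gxx in h2.
have ci : ('i%C : C)^* = - 'i%C by rewrite conj_def /=; apply/eqP; rewrite eq_complex /= oppr0 !eqxx.
rewrite ci in h2.
have hyx : g y x = - g x y by apply: (addrI (g x y)); rewrite h1 subrr.
rewrite hyx in h2.
rewrite mulr0 mulr0 add0r addr0 in h2.
have : 2%:R * 'i%C * g x y = 0.
  have -> : 2%:R * 'i%C * g x y = - (- 'i%C * g x y + 'i%C * - g x y) by ring.
  by rewrite h2 oppr0.
move/eqP; rewrite !mulf_eq0 => /orP[/orP[]|] /eqP //.
- by move=> /eqP; rewrite pnatr_eq0.
- by move=> /eqP; rewrite eq_complex /= oner_eq0 andbF.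
Qed.

Fixpoint seqC (S : V -> V) (n : nat) : V -> V :=
  match n with
  | 0 => id
  | n'.+1 => fun x => seqC S n' x - seqC S n' (S (seqC S n' x))
  end.
Definition seqA S n x := S (seqC S n x).

Lemma seqC_intertw X S1 S2 n : lin X -> (forall x, X (S1 x) = S2 (X x)) ->
  forall x, X (seqC S1 n x) = seqC S2 n (X x).
Proof.
move=> hX h; elim: n => [//|n IH] x /=.
by rewrite linB // IH IH h IH.
Qed.

Lemma seqC_lin S n : lin S -> lin (seqC S n).
Proof.
move=> hS; elim: n => [//|n IH] a x y /=.
rewrite !IH (linD hS) (linZ hS) IH scalerBr.
by rewrite opprD addrACA.
Qed.

Lemma seqC_adj S n : lin S -> adj S S -> adj (seqC S n) (seqC S n).
Proof.
move=> hS aS; elim: n => [//|n IH] x y /=.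
by rewrite ipBl ipBr !IH aS IH.
Qed.

Lemma seqC_comm S n x : lin S -> S (seqC S n x) = seqC S n (S x).
Proof. by move=> hS; apply: seqC_intertw. Qed.

Lemma seqA_lin S n : lin S -> lin (seqA S n).
Proof. by move=> hS; apply: lin_comp => //; apply: seqC_lin. Qed.

Lemma seqA_adj S n : lin S -> adj S S -> adj (seqA S n) (seqA S n).
Proof.
move=> hS aS x y; rewrite /seqA aS (seqC_adj n hS aS).
by rewrite seqC_comm.
Qed.

Lemma seqA0 S x : seqA S 0 x = S x. Proof. by []. Qed.

Lemma seqA_rec S n x : lin S -> seqA S n.+1 x = seqA S n x - seqA S n (seqA S n x).
Proof. by move=> hS; rewrite /seqA /= linB. Qed.

Lemma seqC_id S n x : seqC S n x = seqC S n (seqA S n x) + seqC S n.+1 x.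
Proof. by rewrite /= addrC subrK. Qed.

Definition bnd1 (X : V -> V) := forall x, re (ip (X x) x) <= nq x.

Lemma form_CS X : lin X -> adj X X -> pos X ->
  forall x y, n2 (ip (X x) y) <= re (ip (X x) x) * re (ip (X y) y).
Proof.
move=> hX aX pX; apply: (CS_form (f := fun u v => ip (X u) v)) => //.
- by move=> a x y z; rewrite hX ipD.
- by move=> x y; rewrite aX ipC.
Qed.

Lemma nq_le_form X : lin X -> adj X X -> pos X -> bnd1 X ->
  forall x, nq (X x) <= re (ip (X x) x).
Proof.
move=> hX aX pX bX x.
have h := form_CS hX aX pX x (X x).
rewrite -/(nq (X x)) in h.
have h2 : n2 (ip (X x) (X x)) = nq (X x) ^+ 2 by rewrite ipxx n2_real.
rewrite h2 in h.
have h3 := bX (X x).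
have r0 : 0 <= re (ip (X x) x) := ge0_re (pX x).
have q0 := nq_ge0 (X x).
have h4 : re (ip (X x) x) * re (ip (X (X x)) (X x)) <= re (ip (X x) x) * nq (X x).
  by apply: ler_wpM2l.
nra.
Qed.

Section Norm.
Variable S : V -> V.
Hypotheses (hS : lin S) (aS : adj S S) (pS : pos S) (bS : bnd1 S).

Lemma seqA_re_rec n x :
  re (ip (seqA S n.+1 x) x) = re (ip (seqA S n x) x) - nq (seqA S n x).
Proof.
by rewrite seqA_rec // ipBl reB [ip (seqA S n (seqA S n x)) x](seqA_adj n hS aS).
Qed.

Lemma seqA_posb n : pos (seqA S n) /\ bnd1 (seqA S n).
Proof.
elim: n => [|n [IHp IHb]]; first by split.
have hA := seqA_lin n hS; have aA := seqA_adj n hS aS.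
have key := nq_le_form hA aA IHp IHb.
split => x.
- rewrite seqA_rec // ipBl [ip (seqA S n (seqA S n x)) x]aA ipxx (ge0_real (IHp x)) -rmorphB /= lecR0.
  by rewrite subr_ge0.
- rewrite seqA_re_rec; have := IHb x; have := nq_ge0 (seqA S n x); lra.
Qed.

Lemma seqA_small x e : 0 < e -> exists n, nq (seqA S n x) < e.
Proof.
move=> e0.
have [//|hn] := pselect (exists n, nq (seqA S n x) < e).
have hn' : forall n, e <= nq (seqA S n x).
  by move=> n; rewrite leNgt; apply/negP => h; apply: hn; exists n.
have hind : forall n, re (ip (seqA S n x) x) + n%:R * e <= re (ip (S x) x).
  elim => [|n IH]; first by rewrite mul0r addr0.
  rewrite seqA_re_rec -natr1 mulrDl mul1r; have := hn' n; lra.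
pose N := Num.Def.archi_bound (re (ip (S x) x) / e).
have hN : re (ip (S x) x) / e < N%:R.
  apply: archi_boundP; apply: divr_ge0; [exact: ge0_re | exact: ltW].
have := hind N; have := ge0_re ((seqA_posb N).1 x).
rewrite ltr_pdivrMr // in hN.
lra.
Qed.

Lemma HL K : lin K -> adj K K -> pos K -> (forall x, K (S x) = S (K x)) ->
  forall x, 0 <= re (ip (S (K x)) x).
Proof.
move=> hK aK pK cK x.
have cKn : forall n y, K (seqA S n y) = seqA S n (K y).
  move=> n y; rewrite /seqA cK; congr (S _); exact: seqC_intertw.
have step : forall n, re (ip (seqA S n.+1 (K x)) x) <= re (ip (seqA S n (K x)) x).
  move=> n.
  have -> : seqA S n (K x) = seqA S n (seqA S n (K x)) + seqA S n.+1 (K x).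
    by rewrite seqA_rec // addrC subrK.
  rewrite ipDl reD [ip (seqA S n (seqA S n (K x))) x](seqA_adj n hS aS) -(cKn n x).
  have := ge0_re (pK (seqA S n x)); lra.
have mono : forall n, re (ip (seqA S n (K x)) x) <= re (ip (S (K x)) x).
  elim => [//|n IH]; exact: le_trans (step n) IH.
rewrite leNgt; apply/negP => hr.
set r := re (ip (S (K x)) x) in hr mono.
set k := nq (K x).
have k0 : 0 <= k := nq_ge0 (K x).
have [n hn] : exists n, nq (seqA S n x) < r ^+ 2 / (k + 1).
  apply: seqA_small; apply: divr_gt0; last by lra.
  by rewrite expr2; nra.
have h1 := mono n.
have h2 : n2 (ip (seqA S n (K x)) x) <= k * nq (seqA S n x).
  by rewrite (seqA_adj n hS aS) CS.
have h3 := re_sq_le (ip (seqA S n (K x)) x).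
rewrite ltr_pdivlMr in hn; last by lra.
have m0 := nq_ge0 (seqA S n x).
set m := nq (seqA S n x) in hn h2 m0.
set q := re (ip (seqA S n (K x)) x) in h1 h3.
set z := n2 (ip (seqA S n (K x)) x) in h2 h3.
nra.
Qed.

End Norm.
Definition sc (s : R) (X : V -> V) := fun x => (s%:C) *: X x.

Lemma sc_lin s X : lin X -> lin (sc s X).
Proof. by move=> hX a x y; rewrite /sc hX scalerDr !scalerA [_ * a]mulrC. Qed.
Lemma sc_adj s X Y : adj X Y -> adj (sc s X) (sc s Y).
Proof. by move=> h x y; rewrite /sc ipZl ipZr conjR h. Qed.
Lemma sc_re s X x : re (ip (sc s X x) x) = s * re (ip (X x) x).
Proof. by rewrite /sc ipZl reRM. Qed.
Lemma sc_pos s X : 0 <= s -> pos X -> pos (sc s X).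
Proof.
move=> s0 pX x; rewrite /sc ipZl (ge0_real (pX x)) -rmorphM /= lecR0.
by apply: mulr_ge0 => //; apply: ge0_re.
Qed.

Lemma adj_sym X Y : adj X Y -> adj Y X.
Proof. by move=> h x y; rewrite ipC -h -ipC. Qed.

Lemma pos_bnd X c : lin X -> pos X -> 0 <= c ->
  (forall x, nq (X x) <= c * nq x) ->
  bnd1 (sc (c + 1)^-1 X).
Proof.
move=> hX pX c0 hc x; rewrite sc_re.
have aX := pos_adj hX pX.
have h1 : n2 (ip (X x) x) <= nq (X x) * nq x by apply: CS.
have h2 := re_sq_le (ip (X x) x).
have h3 := hc x.
have r0 := ge0_re (pX x).
have q0 := nq_ge0 x.
have q1 := nq_ge0 (X x).
set r := re (ip (X x) x) in h2 r0 *.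
set q := nq x in h1 h3 q0 *.
set p := nq (X x) in h1 h3 q1.
set z := n2 (ip (X x) x) in h1 h2.
have c1 : 0 < c + 1 by lra.
rewrite -ler_pdivlMl ?invr_gt0 // invrK.
have hr2 : r ^+ 2 <= c * q ^+ 2 by rewrite expr2; nra.
have : r ^+ 2 <= ((c + 1) * q) ^+ 2.
  apply: le_trans hr2 _; rewrite exprMn; apply: ler_wpM2r; first exact: sqr_ge0.
  rewrite expr2; nra.
rewrite -ler_sqrt ?sqrtr_sqr; last exact: sqr_ge0.
by rewrite !ger0_norm //; apply: mulr_ge0 => //; lra.
Qed.

Section KatoN.
Variables T Ts A B : V -> V.
Hypotheses (hT : lin T) (aT : adj T Ts) (hA : lin A) (pA : pos A) (bA : bnd1 A)
  (hB : lin B) (pB : pos B) (bB : bnd1 B)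
  (AA : forall x, A (A x) = Ts (T x)) (BB : forall x, B (B x) = T (Ts x))
  (TA : forall x, T (A x) = B (T x)).

Lemma katoN_pos x y :
  0 <= re (ip (A x) x) + 2 * re (ip (T x) y) + re (ip (B y) y).
Proof.
have aA' : adj A A := pos_adj hA pA.
have aB' : adj B B := pos_adj hB pB.
have aTs' : adj Ts T := adj_sym aT.
have hTs' : lin Ts := adj_lin aT.
pose G n := re (ip (seqA A n x) x) + 2 * re (ip (T (seqC A n x)) y)
            + re (ip (seqA B n y) y).
have TC : forall n u, T (seqC A n u) = seqC B n (T u) by move=> n u; apply: seqC_intertw.
have nqw : forall n, nq (seqC A n (Ts y)) = nq (seqA B n y).
  move=> n; rewrite /nq (seqC_adj n hA aA') re_ipC -aT TC TC.
  rewrite /seqA [ip (B _) (B _)]aB' re_ipC (seqC_adj n hB aB').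
  by rewrite -!BB (seqC_comm _ _ hB) (seqC_comm _ _ hB).
have step : forall n, G n.+1 <= G n.
  move=> n; rewrite /G.
  rewrite [re (ip (seqA A n.+1 x) x)](seqA_re_rec hA aA') [re (ip (seqA B n.+1 y) y)](seqA_re_rec hB aB').
  rewrite [seqC A n x](seqC_id A n x) (linD hT) ipDl reD.
  rewrite [ip (T (seqC A n (seqA A n x))) y]aT (seqC_adj n hA aA') -(nqw n).
  have := nq_ge0 (seqA A n x + seqC A n (Ts y)); rewrite nqD; lra.
have mono : forall n, G n <= G 0.
  elim => [//|n IH]; exact: le_trans (step n) IH.
rewrite leNgt; apply/negP => hF.
have G0 : G 0 = re (ip (A x) x) + 2 * re (ip (T x) y) + re (ip (B y) y) by [].
set F := re (ip (A x) x) + 2 * re (ip (T x) y) + re (ip (B y) y) in hF G0.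
set k := nq y.
have k0 : 0 <= k := nq_ge0 y.
have [n hn] : exists n, nq (seqA A n x) < F ^+ 2 / (4 * (k + 1)).
  apply: seqA_small => //; apply: divr_gt0; last by lra.
  by rewrite expr2; nra.
have h1 := mono n; rewrite G0 /G in h1.
have pa := ge0_re ((seqA_posb hA aA' pA bA n).1 x).
have pb := ge0_re ((seqA_posb hB aB' pB bB n).1 y).
have h2 : n2 (ip (T (seqC A n x)) y) <= nq (seqA A n x) * k.
  have -> : nq (seqA A n x) = nq (T (seqC A n x)).
    by rewrite /nq /seqA aA' AA re_ipC aTs'.
  exact: CS.
have h3 := re_sq_le (ip (T (seqC A n x)) y).
rewrite ltr_pdivlMr in hn; last by lra.
have m0 := nq_ge0 (seqA A n x).
set m := nq (seqA A n x) in hn h2 m0.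
set q := re (ip (T (seqC A n x)) y) in h1 h3.
set z := n2 (ip (T (seqC A n x)) y) in h2 h3.
set a := re (ip (seqA A n x) x) in h1 pa.
set b := re (ip (seqA B n y) y) in h1 pb.
nra.
Qed.

End KatoN.

Section Inter.
Variables T Ts A B : V -> V.
Hypotheses (hT : lin T) (aT : adj T Ts) (hA : lin A) (pA : pos A)
  (hB : lin B) (pB : pos B)
  (AA : forall x, A (A x) = Ts (T x)) (BB : forall x, B (B x) = T (Ts x)).
Variable c : R.
Hypotheses (c0 : 0 <= c) (Tc : forall x, nq (T x) <= c * nq x).

Lemma hTs : lin Ts. Proof. exact: adj_lin aT. Qed.
Lemma aTs : adj Ts T. Proof. exact: adj_sym. Qed.
Lemma aA : adj A A. Proof. exact: pos_adj. Qed.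
Lemma aB : adj B B. Proof. exact: pos_adj. Qed.

Lemma nq_A x : nq (A x) = nq (T x).
Proof. by rewrite /nq aA AA re_ipC aTs. Qed.
Lemma nq_B x : nq (B x) = nq (Ts x).
Proof. by rewrite /nq aB BB re_ipC aT. Qed.

Lemma intertw x : B (T x) = T (A x).
Proof.
pose W x := B (T x) - T (A x).
pose Ws y := Ts (B y) - A (Ts y).
have hTs' := hTs; have aA' := aA; have aB' := aB.
have hW : lin W by move=> a u v; rewrite /W !(hA, hT, hB) scalerBr; rewrite opprD addrACA.
have hWs : lin Ws by move=> a u v; rewrite /Ws !(hA, hTs', hB) scalerBr; rewrite opprD addrACA.
have aW : adj W Ws.
  by move=> u v; rewrite /W /Ws ipBl ipBr aB' aT aT aA'.
have aWs := adj_sym aW.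
have BW : forall u, B (W u) = - W (A u).
  by move=> u; rewrite /W (linB hB) BB AA opprB.
have AWs : forall u, A (Ws u) = - Ws (B u).
  by move=> u; rewrite /Ws (linB hA) AA BB opprB.
pose K u := Ws (W u).
have hK : lin K by apply: lin_comp.
have aK : adj K K by move=> u v; rewrite /K aWs aW.
have pK : pos K by move=> u; rewrite /K aWs; apply: ipP.
have AK : forall u, A (K u) = - Ws (B (W u)) by move=> u; rewrite /K AWs.
have KA : forall u, K (A u) = - Ws (B (W u)) by move=> u; rewrite /K BW (linN hWs) opprK.
set s := (c + 1)^-1.
have s0 : 0 < s by rewrite /s invr_gt0 (le_lt_trans c0) // ltrDl ltr01.
have hS : lin (sc s A) := sc_lin s hA.
have aS : adj (sc s A) (sc s A) := sc_adj s aA'.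
have pS : pos (sc s A) := sc_pos (ltW s0) pA.
have bS : bnd1 (sc s A).
  apply: pos_bnd => // u; rewrite nq_A; exact: Tc.
have cK : forall u, K (sc s A u) = sc s A (K u).
  by move=> u; rewrite /sc (linZ hK) KA AK.
have key : forall u, B (W u) = 0.
  move=> u.
  have h := HL hS aS pS bS hK aK pK cK u.
  rewrite /sc ipZl reRM AK ipNl aWs reN in h.
  have h2 : 0 <= re (ip (B (W u)) (W u)) := ge0_re (pB _).
  have h3 : re (ip (B (W u)) (W u)) = 0.
    have : 0 <= - re (ip (B (W u)) (W u)) by rewrite -(pmulr_rge0 _ s0).
    lra.
  have h4 := form_CS hB aB' pB (W u) (B (W u)).
  rewrite h3 mul0r ipxx n2_real in h4.
  apply: nq_eq0; have h5 : nq (B (W u)) ^+ 2 = 0 by apply/eqP; rewrite eq_le h4 sqr_ge0.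
  by move/eqP: h5; rewrite expf_eq0 /= => /eqP.
set u := K x.
have hu : u = - A (Ts (W x)).
  by rewrite /u /K /Ws key (lin0 hTs') add0r.
have hAu : A u = 0 by rewrite /u AK key (lin0 hWs) oppr0.
have hu0 : u = 0.
  apply: nq_eq0; rewrite /nq {1}hu ipNl aA' hAu ip0r oppr0 //.
have hWx : W x = 0.
  apply: nq_eq0; rewrite /nq aW -/(K x) -/u hu0 ip0r //.
by apply/eqP; rewrite -subr_eq0; apply/eqP.
Qed.

Lemma Tsc x : nq (Ts x) <= c * nq x.
Proof.
have h1 : nq (Ts x) = re (ip (T (Ts x)) x) by rewrite /nq aT.
have h2 := CS (T (Ts x)) x.
have h3 := re_sq_le (ip (T (Ts x)) x).
have h4 := Tc (Ts x).
have p0 := nq_ge0 (Ts x).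
have q0 := nq_ge0 x.
have t0 := nq_ge0 (T (Ts x)).
rewrite -h1 in h3.
set p := nq (Ts x) in h1 h3 h4 p0 *.
set q := nq x in h2 q0 *.
set t := nq (T (Ts x)) in h2 h4 t0.
set z := n2 (ip (T (Ts x)) x) in h2 h3.
have h6 : t * q <= c * p * q by apply: ler_wpM2r.
rewrite expr2 in h3.
have cq0 : 0 <= c * q by apply: mulr_ge0.
rewrite leNgt; apply/negP => hp.
have pp : 0 < p by exact: le_lt_trans cq0 hp.
have : c * q * p < p * p by rewrite ltr_pM2r.
have -> : c * q * p = c * p * q by ring.
lra.
Qed.

Lemma kato_pos x y :
  0 <= re (ip (A x) x) + 2 * re (ip (T x) y) + re (ip (B y) y).
Proof.
set s := (c + 1)^-1.
have s0 : 0 < s by rewrite /s invr_gt0 (le_lt_trans c0) // ltrDl ltr01.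
have hTs' := hTs.
have b1 : bnd1 (sc s A) by apply: pos_bnd => // u; rewrite nq_A; apply: Tc.
have b2 : bnd1 (sc s B) by apply: pos_bnd => // u; rewrite nq_B; apply: Tsc.
have e2 : forall u, sc s A (sc s A u) = sc s Ts (sc s T u).
  by move=> u; rewrite /sc !(linZ hA) !(linZ hTs') AA scalerA.
have e3 : forall u, sc s B (sc s B u) = sc s T (sc s Ts u).
  by move=> u; rewrite /sc !(linZ hB) !(linZ hT) BB scalerA.
have e4 : forall u, sc s T (sc s A u) = sc s B (sc s T u).
  by move=> u; rewrite /sc !(linZ hT) !(linZ hB) intertw.
have h := katoN_pos (sc_lin s hT) (sc_adj s aT) (sc_lin s hA) (sc_pos (ltW s0) pA) b1
  (sc_lin s hB) (sc_pos (ltW s0) pB) b2 e2 e3 e4 x y.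
have e1 : forall u, re (ip (sc s T u) y) = s * re (ip (T u) y).
  by move=> u; rewrite /sc ipZl reRM.
rewrite !sc_re e1 in h.
rewrite -(pmulr_rge0 _ s0).
have -> : s * (re (ip (A x) x) + 2 * re (ip (T x) y) + re (ip (B y) y)) =
  s * re (ip (A x) x) + 2 * (s * re (ip (T x) y)) + s * re (ip (B y) y) by ring.
exact: h.
Qed.

Lemma kato x y : n2 (ip (T x) y) <= re (ip (A x) x) * re (ip (B y) y).
Proof.
have hB' := hB.
apply: quad_lemma; [exact: ge0_re | exact: ge0_re | exact: n2_ge0 |].
move=> t.
set b := ip (T x) y.
have := kato_pos x (- (t%:C * b) *: y).
rewrite (linZ hB') ipZl !ipZr -/b (ge0_real (pB y)).
have E1 : (-(t%:C * b))^* * b = (- t * n2 b)%:C.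
  rewrite rmorphN rmorphM /= conjR.
  have -> : -(t%:C * b^*) * b = - t%:C * (b^* * b) by ring.
  by rewrite mulJ' -rmorphN -rmorphM.
have E2 : -(t%:C * b) * ((-(t%:C * b))^* * (re (ip (B y) y))%:C)
   = (t ^+ 2 * n2 b * re (ip (B y) y))%:C.
  rewrite rmorphN rmorphM /= conjR.
  have -> : -(t%:C * b) * (-(t%:C * b^*) * (re (ip (B y) y))%:C)
     = t%:C ^+ 2 * (b * b^*) * (re (ip (B y) y))%:C by ring.
  by rewrite mulJ -rmorphXn -!rmorphM.
rewrite E1 E2 !reR.
have -> : 2 * (- t * n2 b) = - (2 * t * n2 b) by ring.
by [].
Qed.

End Inter.
Lemma unit_nq x : hnorm ip x = 1 -> nq x = 1.
Proof.
move=> h; have e : Num.sqrt (nq x) = 1 := h.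
by rewrite -(sqr_sqrtr (nq_ge0 x)) e expr1n.
Qed.

Lemma hnormE x : hnorm ip x = Num.sqrt (nq x). Proof. by []. Qed.

Section Sup.
Variable g : V -> R.
Let E := [set r | exists x, hnorm ip x = 1 /\ r = g x].

Lemma supU M x : (forall y, nq y = 1 -> g y <= M) -> hnorm ip x = 1 -> g x <= sup E.
Proof.
move=> hM hx; apply: ub_le_sup; last by exists x.
exists M => r [y [hy ->]]; apply: hM; exact: unit_nq.
Qed.

Lemma supB b : 0 <= b -> (forall x, nq x = 1 -> g x <= b) -> sup E <= b.
Proof.
move=> b0 hb.
have [[x hx]|hn] := pselect (exists x, hnorm ip x = 1).
  apply: ge_sup; first by exists (g x), x.
  move=> r [y [hy ->]]; apply: hb; exact: unit_nq.
have -> : E = set0.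
  by apply/seteqP; split => r // [y [hy _]]; exfalso; apply: hn; exists y.
by rewrite sup0.
Qed.

Lemma sup_ge0 : (forall x, 0 <= g x) -> 0 <= sup E.
Proof.
move=> g0.
have [hs|hn] := pselect (has_sup E); last by rewrite sup_out.
have [r [y [hy _]]] := hs.1.
apply: le_trans (g0 y) _; apply: sup_upper_bound => //; by exists y.
Qed.
End Sup.

Lemma nqZ a x : nq (a *: x) = n2 a * nq x.
Proof.
rewrite /nq ipZl ipZr mulrA mulJ ipxx -rmorphM; by [].
Qed.

Lemma opn_le X c : lin X -> 0 <= c -> (forall x, nq (X x) <= c * nq x) ->
  forall x, nq (X x) <= opnorm ip X ^+ 2 * nq x.
Proof.
move=> hX c0 hc x.
have [e0|ne0] := eqVneq (nq x) 0.
  by rewrite (nq_eq0 e0) (lin0 hX) /nq ip0l /= mulr0.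
have q0 : 0 < nq x by rewrite lt_def ne0 nq_ge0.
set m := Num.sqrt (nq x).
have m0 : 0 < m by rewrite sqrtr_gt0.
have mm : m ^+ 2 = nq x by rewrite sqr_sqrtr // nq_ge0.
set u := (m^-1)%:C *: x.
have nu : nq u = 1.
  by rewrite nqZ n2_real -mm exprVn mulVf // expf_neq0 // gt_eqF.
have hu : hnorm ip u = 1 by rewrite hnormE nu sqrtr1.
have hub := supU (g := fun y => hnorm ip (X y)) (M := Num.sqrt c) _ hu.
have hub' : hnorm ip (X u) <= opnorm ip X.
  apply: hub => y hy; rewrite hnormE ler_wsqrtr //; have := hc y; rewrite hy mulr1 //.
have h2 : nq (X u) <= opnorm ip X ^+ 2.
  rewrite -(sqr_sqrtr (nq_ge0 (X u))) -hnormE.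
  by apply: lerXn2r => //; rewrite ?nnegrE ?sqrtr_ge0 //; apply: le_trans hub'; apply: sqrtr_ge0.
rewrite /u (linZ hX) nqZ n2_real in h2.
rewrite -mm.
have mi : 0 < m^-1 ^+ 2 by rewrite exprn_gt0 // invr_gt0.
rewrite -(ler_pM2l mi); apply: (le_trans h2); rewrite mulrCA -exprMn mulVf ?gt_eqF // expr1n mulr1.
by [].
Qed.

Lemma cmodE (z : C) : cmod z = Num.sqrt (n2 z). Proof. by []. Qed.

Lemma re_le_cmod (z : C) : re z <= cmod z.
Proof.
rewrite cmodE; apply: le_trans (real_ler_norm _) _; first exact: num_real.
by rewrite -sqrtr_sqr ler_wsqrtr // re_sq_le.
Qed.

Lemma cmod_le u x : nq x = 1 -> cmod (ip u x) <= hnorm ip u.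
Proof. by move=> hx; rewrite cmodE hnormE ler_wsqrtr // -[nq u]mulr1 -hx CS. Qed.

Lemma numrad_ub X c x : (forall y, nq (X y) <= c * nq y) -> hnorm ip x = 1 ->
  cmod (ip (X x) x) <= numrad ip X.
Proof.
move=> hc hx.
apply: (supU (g := fun y => cmod (ip (X y) y)) (M := Num.sqrt c)) => // y hy.
apply: le_trans (cmod_le _ hy) _; rewrite hnormE ler_wsqrtr //.
by have := hc y; rewrite hy mulr1.
Qed.

Lemma opnorm_ge0 X : 0 <= opnorm ip X.
Proof. apply: (sup_ge0 (g := fun y => hnorm ip (X y))) => y; exact: sqrtr_ge0. Qed.
Lemma numrad_ge0 X : 0 <= numrad ip X.
Proof. apply: (sup_ge0 (g := fun y => cmod (ip (X y) y))) => y; exact: sqrtr_ge0. Qed.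

Lemma opnorm_leb X b : 0 <= b -> (forall x, nq (X x) <= b ^+ 2 * nq x) -> opnorm ip X <= b.
Proof.
move=> b0 hb; apply: (supB (g := fun y => hnorm ip (X y))) => // x hx.
rewrite hnormE -(ger0_norm b0) -sqrtr_sqr ler_wsqrtr //.
by have := hb x; rewrite hx mulr1.
Qed.

Lemma numrad_leb X b : 0 <= b -> (forall x, nq x = 1 -> n2 (ip (X x) x) <= b ^+ 2) ->
  numrad ip X <= b.
Proof.
move=> b0 hb; apply: (supB (g := fun y => cmod (ip (X y) y))) => // x hx.
by rewrite cmodE -(ger0_norm b0) -sqrtr_sqr ler_wsqrtr // hb.
Qed.

Section Main.
Variables T Ts A B : V -> V.
Hypotheses (hT : lin T) (aT : adj T Ts) (hA : lin A) (pA : pos A)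
  (hB : lin B) (pB : pos B)
  (AA : forall x, A (A x) = Ts (T x)) (BB : forall x, B (B x) = T (Ts x)).
Variable c : R.
Hypotheses (c0 : 0 <= c) (Tc : forall x, nq (T x) <= c * nq x).

Local Notation t := (opnorm ip T).
Local Notation t2 := (opnorm ip (fun x => T (T x))).
Local Notation w := (numrad ip (fun x => A (B x))).
Local Notation P := (fun x => A (A x) + B (B x)).
Local Notation p := (opnorm ip P).

Let aA : adj A A := pos_adj hA pA.
Let aB : adj B B := pos_adj hB pB.
Let hTs : lin Ts := adj_lin aT.
Let aTs : adj Ts T := adj_sym aT.

Let L1 : forall x, nq (T x) <= t ^+ 2 * nq x := opn_le hT c0 Tc.
Let L2 : forall x, nq (Ts x) <= t ^+ 2 * nq x := Tsc aT (sqr_ge0 t) L1.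
Let hTT : lin (fun x => T (T x)) := lin_comp hT hT.
Let aTT : adj (fun x => T (T x)) (fun x => Ts (Ts x)).
Proof. by move=> x y; rewrite aT aT. Qed.
Let L3b : forall x, nq (T (T x)) <= (t ^+ 2 * t ^+ 2) * nq x.
Proof. move=> x; apply: le_trans (L1 _) _; rewrite -mulrA ler_wpM2l ?sqr_ge0 //. Qed.
Let L3 : forall x, nq (T (T x)) <= t2 ^+ 2 * nq x.
Proof. apply: opn_le hTT _ L3b; apply: mulr_ge0; exact: sqr_ge0. Qed.
Let L4 : forall x, nq (Ts (Ts x)) <= t2 ^+ 2 * nq x := Tsc aTT (sqr_ge0 t2) L3.
Let nqA u : nq (A u) = nq (T u).
Proof. by rewrite /nq aA AA re_ipC aTs. Qed.
Let nqB u : nq (B u) = nq (Ts u).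
Proof. by rewrite /nq aB BB re_ipC aT. Qed.

Lemma t2_le : t2 <= t ^+ 2.
Proof.
apply: opnorm_leb; first exact: sqr_ge0.
by move=> x; have := L3b x; rewrite -expr2.
Qed.

Lemma w_le : w <= t2.
Proof.
apply: numrad_leb; first exact: opnorm_ge0.
move=> x hx.
apply: le_trans (CS _ _) _; rewrite hx mulr1 nqA.
set v := T (B x).
have e : nq v = re (ip x (B (Ts v))) by rewrite /nq {1}/v aT aB.
have h1 := re_sq_le (ip x (B (Ts v))).
have h2 := CS x (B (Ts v)).
rewrite hx mul1r nqB -e in h2 h1.
apply: sq_le; [exact: nq_ge0 | exact: sqr_ge0 |].
apply: le_trans h1 _; apply: le_trans h2 _; exact: L4.
Qed.

Let hP : lin P.
Proof. by move=> a x y; rewrite !(linD hA, linD hB, linZ hA, linZ hB) scalerDr addrACA. Qed.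
Let PE x : P x = Ts (T x) + T (Ts x).
Proof. by rewrite /= AA BB. Qed.
Let aP : adj P P.
Proof. by move=> x y; rewrite /= !PE ipDl ipDr aTs aT aT aTs. Qed.
Let reP y : re (ip (P y) y) = nq (T y) + nq (Ts y).
Proof. by rewrite /= PE ipDl reD [ip (T (Ts y)) y]aT aTs. Qed.
Let pP : pos P.
Proof. by move=> y; rewrite /= PE ipDl [ip (T (Ts y)) y]aT aTs; apply: addr_ge0; apply: ipP. Qed.

Local Notation k := (t ^+ 2 + t2).
Let k0 : 0 <= k.
Proof. apply: addr_ge0; [exact: sqr_ge0 | exact: opnorm_ge0]. Qed.

Let Pform y : re (ip (P y) y) <= k * nq y.
Proof.
rewrite /= reP.
set a := Ts y; set b := T y.
set z := T a + Ts b.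
have ez : re (ip z y) = nq a + nq b by rewrite /z ipDl reD aT aTs.
have nz : nq z <= k * (nq a + nq b).
  rewrite /z nqD -aT.
  have h1 := L1 a; have h2 := L2 b.
  have h3 : 2 * re (ip (T (T a)) b) <= t2 * nq a + t2 * nq b.
    apply: amgm.
    - apply: mulr_ge0; [exact: opnorm_ge0 | exact: nq_ge0].
    - apply: mulr_ge0; [exact: opnorm_ge0 | exact: nq_ge0].
    apply: le_trans (re_sq_le _) _; apply: le_trans (CS _ _) _.
    have := L3 a; have := nq_ge0 b; have := opnorm_ge0 (fun x => T (T x)).
    have := nq_ge0 (T (T a)); have := nq_ge0 a.
    move=> q1 q2 q3 q4 q5; rewrite expr2 in q5 *.
    have : nq (T (T a)) * nq b <= t2 * t2 * nq a * nq b by apply: ler_wpM2r.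
    have -> : t2 * nq a * (t2 * nq b) = t2 * t2 * nq a * nq b by ring.
    by [].
  lra.
rewrite addrC -ez.
have hq := nq_ge0 y.
have s0 : 0 <= re (ip z y) by rewrite ez; apply: addr_ge0; exact: nq_ge0.
rewrite -ez in nz.
apply: sq_le => //; first by apply: mulr_ge0.
apply: le_trans (re_sq_le _) _; apply: le_trans (CS _ _) _.
have -> : k * nq y * re (ip z y) = k * re (ip z y) * nq y by ring.
by apply: ler_wpM2r.
Qed.

Let Pnorm y : nq (P y) <= k ^+ 2 * nq y.
Proof.
have h := form_CS hP aP pP y (P y).
rewrite ipxx n2_real -/(nq (P y)) in h.
apply: sq_le; [exact: nq_ge0 | apply: mulr_ge0; [exact: sqr_ge0 | exact: nq_ge0] |].
apply: le_trans h _.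
have h1 := Pform y; have h2 := Pform (P y).
have q0 := nq_ge0 (P y); have q1 := nq_ge0 y.
have r0 := ge0_re (pP y).
have : re (ip (P y) y) * re (ip (P (P y)) (P y)) <= (k * nq y) * (k * nq (P y)).
  apply: ler_pM => //; exact: ge0_re.
have -> : k * nq y * (k * nq (P y)) = k ^+ 2 * nq y * nq (P y) by rewrite expr2; ring.
by [].
Qed.

Lemma p_le : p <= k.
Proof. apply: opnorm_leb => //; exact: Pnorm. Qed.

Lemma part1 : numrad ip T <= 2^-1 * Num.sqrt (2 * w + p).
Proof.
have w0 := numrad_ge0 (fun x => A (B x)); have p0 := opnorm_ge0 P.
have sq0 : 0 <= 2 * w + p by lra.
apply: numrad_leb; first by apply: mulr_ge0; [rewrite invr_ge0; lra | exact: sqrtr_ge0].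
move=> x hx.
rewrite exprMn sqr_sqrtr //.
have hk := kato hT aT hA pA hB pB AA BB c0 Tc x x.
have a0 := ge0_re (pA x); have b0 := ge0_re (pB x).
set a := re (ip (A x) x) in hk a0 *; set b := re (ip (B x) x) in hk b0 *.
have e1 : a + b = re (ip (A x + B x) x) by rewrite ipDl reD.
have h1 := re_sq_le (ip (A x + B x) x).
have h2 := CS (A x + B x) x.
rewrite hx mulr1 nqD in h2.
have e2 : nq (A x) + nq (B x) = re (ip (P x) x).
  by rewrite /= ipDl reD [ip (A (A x)) x]aA [ip (B (B x)) x]aB.
have e3 : re (ip (A x) (B x)) = re (ip (A (B x)) x) by rewrite aA re_ipC.
have hx1 : hnorm ip x = 1 by rewrite hnormE hx sqrtr1.
have h3 : re (ip (P x) x) <= p.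
  apply: le_trans (re_le_cmod _) _; apply: le_trans (cmod_le _ hx) _.
  rewrite hnormE -(ger0_norm p0) -sqrtr_sqr ler_wsqrtr //.
  have := opn_le hP (sqr_ge0 k) Pnorm x; rewrite hx mulr1 //.
have h4 : re (ip (A (B x)) x) <= w.
  apply: le_trans (re_le_cmod _) _.
  apply: (numrad_ub (c := t ^+ 2 * t ^+ 2)) => // y.
  rewrite nqA; apply: le_trans (L1 _) _; rewrite nqB -mulrA ler_wpM2l ?sqr_ge0 //.
rewrite -e1 in h1; rewrite e2 e3 in h2.
have hab : 4%:R * (a * b) <= (a + b) ^+ 2 by rewrite expr2; have := sqr_ge0 (a - b); rewrite expr2; lra.
have -> : (2^-1 : R) ^+ 2 = 4%:R^-1 by rewrite expr2 -invfM -natrM.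
rewrite mulrC ler_pdivlMr; last by rewrite ltr0n.
lra.
Qed.

Lemma part2 : 2^-1 * Num.sqrt (2 * w + p) <= 2^-1 * (Num.sqrt t2 + t).
Proof.
rewrite ler_pM2l; last by rewrite invr_gt0 ltr0n.
have t0 := opnorm_ge0 T; have t20 := opnorm_ge0 (fun x => T (T x)).
have u0 := sqrtr_ge0 t2.
have uu : Num.sqrt t2 ^+ 2 = t2 by rewrite sqr_sqrtr.
have ut : Num.sqrt t2 <= t.
  by rewrite -(ger0_norm t0) -sqrtr_sqr ler_wsqrtr // t2_le.
have h1 := w_le; have h2 := p_le; have h3 := t2_le.
rewrite -(ger0_norm (addr_ge0 u0 t0)) -sqrtr_sqr ler_wsqrtr //.
set u := Num.sqrt t2 in u0 uu ut *.
have hp : 0 <= u * (t - u) by apply: mulr_ge0; lra.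
rewrite -uu in h1 h2 h3 *.
rewrite !expr2 in h2 h3 *.
nra.
Qed.

End Main.
End Hil.

Local Close Scope complex_scope.
Local Close Scope classical_set_scope.

Theorem corollary3p6 (R : realType) (H : lmodType R[i]) (ip : H -> H -> R[i])
    (hilH : is_hilbert ip) (T Ts A B : H -> H)
    (hT : is_bounded_op ip T) (hTs : is_adjoint ip T Ts)
    (hA : is_pos_sqrt ip (fun x => Ts (T x)) A)
    (hB : is_pos_sqrt ip (fun x => T (Ts x)) B) :
  numrad ip T
    <= 2^-1 * Num.sqrt (2 * numrad ip (fun x => A (B x))
                        + opnorm ip (fun x => A (A x) + B (B x)))
  /\ 2^-1 * Num.sqrt (2 * numrad ip (fun x => A (B x))
                      + opnorm ip (fun x => A (A x) + B (B x)))
     <= 2^-1 * (Num.sqrt (opnorm ip (fun x => T (T x))) + opnorm ip T).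
Proof.
case: hilH => ipD ipC ipP ipE _.
case: hT => linT [M hM].
case: hA => [[linA _] posA AA].
case: hB => [[linB _] posB BB].
have c0 : 0 <= M ^+ 2 := sqr_ge0 M.
have Tc : forall x, nq ip (T x) <= M ^+ 2 * nq ip x.
  move=> x; have := hM x; rewrite !(hnormE ip) => h.
  rewrite -(sqr_sqrtr (nq_ge0 ipP (T x))) -(sqr_sqrtr (nq_ge0 ipP x)) -exprMn.
  apply: lerXn2r => //; rewrite nnegrE ?sqrtr_ge0 //.
  apply: le_trans h; exact: sqrtr_ge0.
split.
- exact: (part1 ipD ipC ipP ipE linT hTs linA posA linB posB AA BB c0 Tc).
- exact: (part2 ipD ipC ipP ipE linT hTs linA posA linB posB AA BB c0 Tc).
Qed.
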